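(* Let $X$, $P$ (irreducible, row-stochastic), $\Sigma$, $\mu$, $\{A_i\}_{i\in X}$ be as in the context, with $\{A_i\}$ projectively uniformly hyperbolic with respect to $\Sigma$ and a multicone fixed; let $R$, $Q$, a recurrent class $C$, $\Sigma_C$, $\pi$ and $\mu_C$ be as in the context. Define $\vartheta:\Sigma_C\to\Sigma$ by $\vartheta((r_n)_{n\ge0})=(\tau(r_n))_{n\ge0}$. Then $\vartheta$ is surjective and $\vartheta_*\mu_C=\mu$.
   Context: $X$ finite; $P$ row-stochastic and irreducible; $\Sigma=\{x\in X^{\mathbb N_0}:P_{x_nx_{n+1}}>0\ \forall n\}$; $p$ the stationary probability vector; $\mu$ the Markov measure with $\mu([i_0,\dots,i_n])=p_{i_0}P_{i_0i_1}\cdots P_{i_{n-1}i_n}$. Projective uniform hyperbolicity: on $\widehat\Sigma=\{(x_n)_{n\in\mathbb Z}:P_{x_nx_{n+1}}>0\}$ with left shift $\widehat\sigma$ there is a continuous splitting $\mathbb R^2=E^d(\hat x)\oplus E^w(\hat x)$ into lines with $A_{x_0}E^*(\hat x)=E^*(\widehat\sigma\hat x)$ ($*=d,w$) and $n\ge1$ with $\|A_{x_{n-1}}\cdots A_{x_0}|_{E^w(\hat x)}\|<\|A_{x_{n-1}}\cdots A_{x_0}|_{E^d(\hat x)}\|$ for all $\hat x$. A multicone is a family $\{M_i\}$ of non-empty proper subsets of $\mathbb{RP}^1$, each a finite union of open intervals, with $\overline{[A_j](M_i)}\subset M_j$ whenever $P_{ij}>0$ ($[A]$ the projective action). Write $M_i=\bigsqcup_{a=1}^{m(i)}M_{i,a}$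 (components); for $P_{ij}>0$ let $\beta(i,a,j)$ be the unique $b$ with $[A_j](\overline{M_{i,a}})\subset M_{j,b}$. $R=\{((i,a),(j,b)):P_{ij}>0,\ 1\le a\le m(i),\ b=\beta(i,a,j)\}$, and for $r=((i,a),(j,b))$: $s(r)=(i,a)$, $t(r)=(j,b)$, $\tau(r)=j$. $Q_{r,r'}=P_{\tau(r)\tau(r')}$ if $t(r)=s(r')$, $0$ otherwise. A recurrent class is $C\subset R$ with $Q|_C$ irreducible and ($r\in C$, $Q_{r,r'}>0\Rightarrow r'\in C$). $\Sigma_C=\{(r_n)\in C^{\mathbb N_0}:Q_{r_nr_{n+1}}>0\}$, $\pi$ the stationary probability vector of $Q|_C$, $\mu_C$ the corresponding Markov measure on $\Sigma_C$. *)

(* Defs.v *)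
From HB Require Import structures.
From mathcomp Require Import all_boot all_order all_algebra.
From mathcomp Require Import all_classical all_reals all_analysis.
Set Implicit Arguments. Unset Strict Implicit. Unset Printing Implicit Defensive.
Import Order.TTheory GRing.Theory Num.Theory.
Import numFieldNormedType.Exports.
Local Open Scope classical_set_scope.
Local Open Scope ring_scope.

(* The point t0 is only needed because MathComp-Analysis measurable types    *)
(* must be pointed types; it plays no mathematical role.                     *)
Definition pseq (T : Type) (t0 : T) : Type := nat -> T.
HB.instance Definition _ (T : choiceType) (t0 : T) := Choice.on (pseq t0).
HB.instance Definition _ (T : choiceType) (t0 : T) :=
  isPointed.Build (pseq t0) (fun _ => t0).

Definition cyl (T : Type) (t0 : T) (w : seq T) : set (pseq t0) :=
  [set x | forall k, (k < size w)%N -> x k = nth t0 w k].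
Arguments cyl {T} t0 w.
Definition cylinders (T : Type) (t0 : T) : set (set (pseq t0)) :=
  [set cyl t0 w | w in [set: seq T]].
Arguments cylinders {T} t0.
(* T^N as a measurable type, with the cylinder (= product = Borel) sigma-algebra *)
Definition seqspace (T : choiceType) (t0 : T) := g_sigma_algebraType (cylinders t0).
Arguments seqspace {T} t0.

Section Defs.
Variable R : realType.

Definition fmul (T : finType) (A B : T -> T -> R) : T -> T -> R :=
  fun i j => \sum_(k : T) A i k * B k j.
Definition fid (T : finType) : T -> T -> R := fun i j => (i == j)%:R.
Definition fpow (T : finType) (A : T -> T -> R) (n : nat) : T -> T -> R :=
  iter n (fmul A) (@fid T).

Definition row_stochastic (T : finType) (P : T -> T -> R) :=
  (forall i j, 0 <= P i j) /\ (forall i, \sum_(j : T) P i j = 1).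
Definition irreducible (T : finType) (P : T -> T -> R) :=
  forall i j, exists n, 0 < fpow P n i j.
Definition stationary_prob (T : finType) (P : T -> T -> R) (p : T -> R) :=
  [/\ forall i, 0 <= p i, \sum_(i : T) p i = 1 &
      forall j, \sum_(i : T) p i * P i j = p j].

Definition restr (T : finType) (C : {set T}) (A : T -> T -> R) : T -> T -> R :=
  fun i j => if (i \in C) && (j \in C) then A i j else 0.
Definition irreducible_on (T : finType) (C : {set T}) (A : T -> T -> R) :=
  forall i j, i \in C -> j \in C -> exists n, 0 < fpow (restr C A) n i j.
(* pi is the stationary probability vector of A|_C (values off C irrelevant) *)
Definition stationary_prob_on (T : finType) (C : {set T}) (A : T -> T -> R)
    (pi : T -> R) :=
  [/\ forall i, i \in C -> 0 <= pi i, \sum_(i in C) pi i = 1 &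
      forall j, j \in C -> \sum_(i in C) pi i * A i j = pi j].

Fixpoint chain (T : Type) (A : T -> T -> R) (t : T) (w : seq T) : R :=
  if w is t' :: w' then A t t' * chain A t' w' else 1.

(* mu([i0,...,in]) = p_{i0} P_{i0 i1} ... P_{i(n-1) in}; as a measure on X^N,
   concentrated on Sigma *)
Definition markov_measure (X : finType) (x0 : X)
    (mu : {measure set (seqspace x0) -> \bar R}) (p : X -> R) (P : X -> X -> R) :=
  forall (i0 : X) (w : seq X), mu (cyl x0 (i0 :: w)) = (p i0 * chain P i0 w)%:E.

(* Markov measure on C^N (as a measure on T^N concentrated on C^N) *)
Definition markov_measure_on (T : finType) (t0 : T) (C : {set T})
    (mu : {measure set (seqspace t0) -> \bar R}) (pi : T -> R) (Q : T -> T -> R) :=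
  forall (r0 : T) (w : seq T), mu (cyl t0 (r0 :: w)) =
    (if all (fun r => r \in C) (r0 :: w) then pi r0 * chain Q r0 w else 0)%:E.

(* The projective line RP^1 = R / pi Z : a point is represented by an angle   *)
(* t (the line spanned by (cos t, sin t)); subsets of RP^1 are represented by *)
(* their (pi-periodic) preimages in R.                                        *)
Definition uvec (t : R) : 'cV[R]_2 :=
  \col_(k < 2) (if k == ord0 then cos t else sin t).
Definition parallel (v w : 'cV[R]_2) : Prop :=
  v ord0 ord0 * w ord_max ord0 - v ord_max ord0 * w ord0 ord0 = 0.
Definition vnorm (v : 'cV[R]_2) : R :=
  Num.sqrt (v ord0 ord0 ^+ 2 + v ord_max ord0 ^+ 2).
Definition pimg (A : 'M[R]_2) (M : set R) : set R :=
  [set s | exists2 t, M t & parallel (A *m uvec t) (uvec s)].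
(* lift of the open arc of RP^1 from [a] to [b] *)
Definition arc (a b : R) : set R :=
  [set t | exists k : int, a < t + k%:~R * pi < b].
(* M is (the lift of) an open interval of RP^1 which is a proper subset *)
Definition lifted_open_arc (M : set R) :=
  exists a b, [/\ a < b, b <= a + pi & M = arc a b].

Section Multicone.
Variables (X : finType) (P : X -> X -> R) (A : X -> 'M[R]_2).
Variables (m : X -> nat) (Mc : forall i : X, 'I_(m i) -> set R).

Definition Mcone (i : X) : set R := [set t | exists a : 'I_(m i), @Mc i a t].

(* {M_i} is a multicone whose components are the M_{i,a}, a < m i:
   the M_{i,a} are pairwise disjoint open arcs (hence exactly the connected
   components of M_i, and M_i is a finite union of open intervals) *)
Definition multicone_components :=
  [/\ forall i (a : 'I_(m i)), lifted_open_arc (@Mc i a),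
      forall i (a b : 'I_(m i)), a != b -> @Mc i a `&` @Mc i b = set0,
      forall i, Mcone i <> set0 /\ Mcone i <> setT &
      forall i j, 0 < P i j -> closure (pimg (A j) (Mcone i)) `<=` Mcone j].

Definition cstate := {i : X & 'I_(m i)}.
Definition rstate := (cstate * cstate)%type.

(* r = ((i,a),(j,b)) belongs to R : P_ij > 0 and b = beta(i,a,j), i.e.
   [A_j](closure M_{i,a}) is contained in M_{j,b} *)
Definition Rrel (r : rstate) : Prop :=
  0 < P (tag r.1) (tag r.2) /\
  pimg (A (tag r.2)) (closure (Mc (tagged r.1))) `<=` Mc (tagged r.2).

Definition tau (r : rstate) : X := tag r.2.

Definition Qm (r r' : rstate) : R :=
  if r.2 == r'.1 then P (tau r) (tau r') else 0.

Definition recurrent_class (C : {set rstate}) :=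
  [/\ exists r, r \in C, forall r, r \in C -> Rrel r, irreducible_on C Qm &
      forall r r', r \in C -> Rrel r' -> 0 < Qm r r' -> r' \in C].

Definition SigmaC (C : {set rstate}) : set (nat -> rstate) :=
  [set y | forall n, y n \in C /\ 0 < Qm (y n) (y n.+1)].

Definition vartheta (y : nat -> rstate) : nat -> X := fun n => tau (y n).

End Multicone.

Section PUH.
Variables (X : finType) (P : X -> X -> R) (A : X -> 'M[R]_2).

Definition Sigma : set (nat -> X) := [set x | forall n, 0 < P (x n) (x n.+1)].
Definition Sighat : set (int -> X) := [set x | forall n : int, 0 < P (x n) (x (n + 1))].
Definition hshift (x : int -> X) : int -> X := fun n => x (n + 1).

Fixpoint cocycle (x : int -> X) (n : nat) : 'M[R]_2 :=
  if n is k.+1 then A (x k%:Z) *m cocycle x k else 1%:M.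

(* continuity of a map Sighat -> RP^1 (product topology on Sighat; on RP^1
   the distance |sin(s - t)| between the lines of angles s, t) *)
Definition cont_Sighat (E : (int -> X) -> R) :=
  forall x, Sighat x -> forall e, 0 < e -> exists N : nat,
    forall y, Sighat y -> (forall n : int, `|n| <= N%:Z -> y n = x n) ->
      `|sin (E y - E x)| < e.

Definition proj_unif_hyp :=
  exists Ed Ew : (int -> X) -> R,
  [/\ cont_Sighat Ed /\ cont_Sighat Ew,
      (* E^d(x) and E^w(x) are distinct lines, so R^2 = E^d + E^w *)
      forall x, Sighat x -> sin (Ed x - Ew x) != 0,
      forall x, Sighat x ->
        parallel (A (x 0) *m uvec (Ed x)) (uvec (Ed (hshift x))) /\
        parallel (A (x 0) *m uvec (Ew x)) (uvec (Ew (hshift x))) &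
      exists n : nat, (0 < n)%N /\ forall x, Sighat x ->
        vnorm (cocycle x n *m uvec (Ew x)) < vnorm (cocycle x n *m uvec (Ed x))].

End PUH.
End Defs.

(* Main.v *)
Require Import Defs.
From HB Require Import structures.
From mathcomp Require Import all_boot all_order all_algebra.
From mathcomp Require Import all_classical all_reals all_analysis.
From mathcomp Require Import ring lra.
Import Order.TTheory GRing.Theory Num.Theory.
Import numFieldNormedType.Exports.
Local Open Scope classical_set_scope.
Local Open Scope ring_scope.
Set Implicit Arguments. Unset Strict Implicit. Unset Printing Implicit Defensive.


Lemma fpow_S (R : realType) (T : finType) (A : T -> T -> R) n i j :
  fpow A n.+1 i j = \sum_k A i k * fpow A n k j.
Proof. by []. Qed.

Lemma fpow_ge0 (R : realType) (T : finType) (A : T -> T -> R) :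
  (forall i j, 0 <= A i j) -> forall n i j, 0 <= fpow A n i j.
Proof.
move=> A0; elim=> [|n IH] i j.
  by rewrite /fpow /= /fid ler0n.
by rewrite fpow_S; apply: sumr_ge0 => k _; apply: mulr_ge0.
Qed.

Lemma stat_fpow (R : realType) (T : finType) (A : T -> T -> R) (v : T -> R) :
  (forall j, \sum_i v i * A i j = v j) ->
  forall n j, \sum_i v i * fpow A n i j = v j.
Proof.
move=> vA; elim=> [|n IH] j.
  rewrite /fpow /= /fid (bigD1 j) //= eqxx mulr1 big1 ?addr0 // => i /negbTE.
  by rewrite eq_sym => ->; rewrite mulr0.
rewrite -[RHS]IH.
under eq_bigr do rewrite fpow_S mulr_sumr.
rewrite exchange_big /=; apply: eq_bigr => k _.
rewrite -(vA k) mulr_suml; apply: eq_bigr => i _; by rewrite mulrA.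
Qed.

Lemma spread (R : realType) (T : finType) (A : T -> T -> R) (v : T -> R) :
  (forall i j, 0 <= A i j) -> (forall i, 0 <= v i) ->
  (forall j, \sum_i v i * A i j = v j) ->
  forall n i j, v i * fpow A n i j <= v j.
Proof.
move=> A0 v0 vA n i j.
rewrite -(stat_fpow vA n j) (bigD1 i) //= lerDl.
by apply: sumr_ge0 => k _; apply: mulr_ge0 => //; apply: fpow_ge0.
Qed.

Lemma exists_pos (R : realType) (T : finType) (v : T -> R) (P : pred T) :
  (forall i, P i -> 0 <= v i) -> \sum_(i | P i) v i = 1 ->
  exists i, P i /\ 0 < v i.
Proof.
move=> v0 s1.
case: (pickP (fun i => P i && (0 < v i))) => [i /andP[Pi Hi]|H].
  by exists i.
suff : \sum_(i | P i) v i = 0 by rewrite s1 => /eqP; rewrite oner_eq0.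
apply: big1 => i Pi; move: (H i); rewrite Pi /= => /negbT.
by rewrite lt_def negb_and negbK (v0 _ Pi) orbF => /eqP.
Qed.

Lemma pos_irr (R : realType) (T : finType) (A : T -> T -> R) (v : T -> R) :
  (forall i j, 0 <= A i j) -> irreducible A -> stationary_prob A v ->
  forall j, 0 < v j.
Proof.
move=> A0 irr [v0 s1 vA] j.
have [i [_ vi]] := exists_pos (P := predT) (fun i _ => v0 i) s1.
have [n Hn] := irr i j.
apply: lt_le_trans (spread A0 v0 vA n i j).
exact: mulr_gt0.
Qed.

Lemma stat_unique (R : realType) (T : finType) (A : T -> T -> R) (p q : T -> R) :
  (forall i j, 0 <= A i j) -> irreducible A -> stationary_prob A p ->
  stationary_prob A q -> forall j, q j = p j.
Proof.
move=> A0 irr sp sq j.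
have p0 := pos_irr A0 irr sp.
case: sp => [p0' ps pA]; case: sq => [q0 qs qA].
pose i1 := [arg min_(i < j) (q i / p i)]%O.
have ismin : forall k, q i1 / p i1 <= q k / p k.
  rewrite /i1; case: arg_minP => // i _ H k; exact: H.
pose c := q i1 / p i1.
pose v k := q k - c * p k.
have v0 : forall k, 0 <= v k.
  move=> k; rewrite /v subr_ge0 -ler_pdivlMr //; exact: ismin.
have vA : forall k, \sum_i v i * A i k = v k.
  move=> k; rewrite /v -(qA k) -(pA k) mulr_sumr -sumrB.
  by apply: eq_bigr => i _; rewrite mulrBl mulrA.
have vis : v i1 = 0.
  by rewrite /v /c mulrAC -mulrA divff ?mulr1 ?subrr // gt_eqF.
have vz : forall k, v k = 0.
  move=> k; apply/eqP; rewrite eq_le v0 andbT leNgt; apply/negP => vk.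
  have [n Hn] := irr k i1.
  have := spread A0 v0 vA n k i1; rewrite vis.
  by apply/negP; rewrite -ltNge; apply: mulr_gt0.
have qcp : forall k, q k = c * p k.
  by move=> k; apply/eqP; rewrite -subr_eq0; apply/eqP; apply: vz.
have c1 : c = 1.
  by move: qs; under eq_bigr do rewrite qcp; rewrite -mulr_sumr ps mulr1.
by rewrite qcp c1 mul1r.
Qed.


Lemma par_exists (R : realType) (v : 'cV[R]_2) : exists s, parallel v (uvec s).
Proof.
rewrite /parallel /uvec.
have [v0|v0] := eqVneq (v ord0 ord0) 0.
  exists (pi / 2); rewrite !mxE /= v0 cos_pihalf; by rewrite mul0r mulr0 subrr.
exists (atan (v ord_max ord0 / v ord0 ord0)); rewrite !mxE /=.
have [hb ht] := atan_def (v ord_max ord0 / v ord0 ord0).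
have c0 : cos (atan (v ord_max ord0 / v ord0 ord0)) != 0.
  by have := cos_gt0_pihalf hb; rewrite lt0r => /andP[].
move: ht; rewrite /tan => ht.
set a := atan _ in c0 ht *.
have -> : sin a = v ord_max ord0 / v ord0 ord0 * cos a.
  by rewrite -ht mulrAC -mulrA divff ?mulr1.
by rewrite mulrA mulrCA divff // mulr1 subrr.
Qed.

Lemma arc_ne (R : realType) (M : set R) : lifted_open_arc M -> exists t, M t.
Proof.
move=> [a [b [ab _ ->]]]; exists ((a + b) / 2); exists 0.
rewrite mulr0z mul0r addr0; have [h1 h2] := midf_lt ab; by rewrite h1 h2.
Qed.


Lemma in_bigU (U : Type) (I : eqType) (s : seq I) (Pr : pred I) (F : I -> set U) y :
  (\big[setU/set0]_(i <- s | Pr i) F i) y <-> exists i, [/\ i \in s, Pr i & F i y].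
Proof.
elim: s => [|a s IH]; first by rewrite big_nil; split => // [[i []]].
rewrite big_cons; case: ifP => Pa.
  split.
    case=> [Fa|/IH [i [i1 i2 i3]]]; first by exists a; rewrite mem_head.
    by exists i; rewrite in_cons i1 orbT.
  case=> i [/predU1P [->|iis] Pi Fi]; first by left.
  by right; apply/IH; exists i.
rewrite IH; split; case=> i [i1 i2 i3]; exists i; split => //; first by rewrite in_cons i1 orbT.
by case/predU1P: i1 => // ea; move: Pa; rewrite -ea i2.
Qed.

Lemma measure_bigU d (T : measurableType d) (R : realType)
  (mu : {measure set T -> \bar R}) (I : eqType) (s : seq I) (Pr : pred I)
  (F : I -> set T) : uniq s -> (forall i, measurable (F i)) ->
  (forall i j, i != j -> F i `&` F j = set0) ->
  mu (\big[setU/set0]_(i <- s | Pr i) F i) = (\sum_(i <- s | Pr i) mu (F i))%E.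
Proof.
move=> us mF dF; elim: s us => [|a s IH] /=; first by rewrite !big_nil measure0.
move=> /andP[nas us]; rewrite !big_cons; case: ifP => Pa; last exact: (IH us).
rewrite measureU //; first by congr (_ + _)%E; exact: (IH us).
- by apply: bigsetU_measurable => i _; exact: mF.
apply/seteqP; split => // y [Fa /in_bigU [i [iis _ Fi]]].
have ai : a != i by apply/eqP => ai; move: nas; rewrite ai iis.
by have := dF a i ai; move/seteqP => [+ _]; apply; split.
Qed.

Lemma cyl_meas (T : choiceType) (t0 : T) (w : seq T) :
  measurable (cyl t0 w : set (seqspace t0)).
Proof. by apply: sub_sigma_algebra; exists w. Qed.

Definition SetW (T : choiceType) (t0 : T) (Y : Type) (y0 : Y) (f : T -> Y)
  (u : seq T) (w : seq Y) : set (seqspace t0) :=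
  [set y | (forall k, (k < size u)%N -> y k = nth t0 u k) /\
           (forall k, (k < size w)%N -> f (y (size u + k)%N) = nth y0 w k)].
Arguments SetW {T} t0 {Y} y0 f u w.

Lemma SetW_nil (T : choiceType) (t0 : T) (Y : Type) (y0 : Y) (f : T -> Y) u :
  SetW t0 y0 f u [::] = cyl t0 u.
Proof. by apply/seteqP; split => y; [case|split]. Qed.

Lemma SetW_cons (T : finType) (t0 : T) (Y : eqType) (y0 : Y) (f : T -> Y) u j w :
  SetW t0 y0 f u (j :: w) =
  \big[setU/set0]_(r | f r == j) SetW t0 y0 f (rcons u r) w.
Proof.
apply/seteqP; split => y.
  case=> Hu Hw; apply/in_bigU; exists (y (size u)); split.
  - by rewrite mem_index_enum.
  - by have := Hw 0%N erefl; rewrite addn0 => ->.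
  split.
    move=> k; rewrite size_rcons ltnS leq_eqVlt nth_rcons.
    case/orP=> [/eqP ->|ku]; first by rewrite ltnn eqxx.
    by rewrite ku; apply: Hu.
  by move=> k kw; rewrite size_rcons addSnnS; apply: (Hw k.+1).
move/in_bigU => [r [_ /eqP fr [Hu Hw]]]; split.
  move=> k ku; have := Hu k; rewrite size_rcons nth_rcons ltnS ku => -> //.
  exact: ltnW.
case=> [|k] /= kw.
  have := Hu (size u); rewrite size_rcons nth_rcons ltnn eqxx addn0 => -> //.
by rewrite addnS -addSn -(size_rcons u r) Hw.
Qed.

Lemma SetW_meas (T : finType) (t0 : T) (Y : eqType) (y0 : Y) (f : T -> Y) w u :
  measurable (SetW t0 y0 f u w).
Proof.
elim: w u => [|j w IH] u; first by rewrite SetW_nil; exact: cyl_meas.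
by rewrite SetW_cons; apply: bigsetU_measurable => r _; exact: IH.
Qed.

Lemma SetW_disj (T : finType) (t0 : T) (Y : eqType) (y0 : Y) (f : T -> Y) u w
  (r r' : T) : r != r' ->
  SetW t0 y0 f (rcons u r) w `&` SetW t0 y0 f (rcons u r') w = set0.
Proof.
move=> nr; apply/seteqP; split => // y [[H1 _] [H2 _]].
have := H1 (size u); have := H2 (size u).
rewrite !size_rcons !nth_rcons ltnn eqxx ltnSn => -> // e.
by move: nr; rewrite e // eqxx.
Qed.

Lemma cylI (T : choiceType) (t0 : T) (u v : seq T) :
  (cyl t0 u `&` cyl t0 v = set0) \/ (exists w, cyl t0 u `&` cyl t0 v = cyl t0 w).
Proof.
wlog: u v / (size u <= size v)%N.
  move=> H; case: (leqP (size u) (size v)) => [|/ltnW] h; first exact: H.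
  by rewrite setIC; apply: H.
move=> uv.
case: (pselect (forall k, (k < size u)%N -> nth t0 u k = nth t0 v k)) => [Hk|Hk].
  right; exists v; apply/seteqP; split => y; first by case.
  move=> Hv; split => // k ku.
  by rewrite (Hv k (leq_trans ku uv)) Hk.
left; apply/seteqP; split => // y [Hu Hv]; apply: Hk => k ku.
by rewrite -(Hu k ku) (Hv k (leq_trans ku uv)).
Qed.

Lemma cyl0 (T : choiceType) (t0 : T) : cyl t0 [::] = setT.
Proof. by apply/seteqP; split => // y _ k. Qed.

Lemma cyl_split (T : finType) (t0 : T) :
  cyl t0 [::] = \big[setU/set0]_(r <- index_enum T | true) cyl t0 [:: r].
Proof.
apply/seteqP; split => y _ //.
by apply/in_bigU; exists (y 0%N); rewrite mem_index_enum; split => // [[|k]].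
Qed.

Lemma cyl1_disj (T : choiceType) (t0 : T) (r r' : T) : r != r' ->
  cyl t0 [:: r] `&` cyl t0 [:: r'] = set0.
Proof.
move=> nr; apply/seteqP; split => // y [H1 H2].
have := H1 0%N erefl; have := H2 0%N erefl => /= -> e.
by move: nr; rewrite e eqxx.
Qed.

Lemma chain_rcons (R : realType) (T : Type) (Q : T -> T -> R) a u r :
  chain Q a (rcons u r) = chain Q a u * Q (last a u) r.
Proof.
elim: u a => [|b u IH] a /=; first by rewrite mulr1 mul1r.
by rewrite IH mulrA.
Qed.

Fixpoint iterseq (T : Type) (f : nat -> T -> T) (a : T) (n : nat) : T :=
  if n is k.+1 then f k (iterseq f a k) else a.


Section Main.
Variables (R : realType) (X : finType) (P : X -> X -> R) (A : X -> 'M[R]_2)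
  (m : X -> nat) (Mc : forall i : X, 'I_(m i) -> set R)
  (C : {set rstate m}) (piC : rstate m -> R) (p : X -> R).
Local Notation QQ := (Qm (m:=m) P).
Hypothesis Hmc : multicone_components P A Mc.
Hypothesis Hrc : recurrent_class P A Mc C.
Hypothesis Hst : stationary_prob_on C QQ piC.
Hypothesis Hrs : row_stochastic P.
Hypothesis Hirr : irreducible P.
Hypothesis Hp : stationary_prob P p.

Lemma uniqR (r1 r2 : rstate m) : r1 \in C -> r2 \in C -> r1.1 = r2.1 ->
  tau r1 = tau r2 -> r1 = r2.
Proof.
case: Hrc => _ CR _ _.
move=> /CR [_ H1] /CR [_ H2].
case: r1 H1 => c [j b1] /= H1; case: r2 H2 => c2 [j2 b2] /= H2.
move=> ec; subst c2; rewrite /tau /= => ej; subst j2.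
case: Hmc => arcs disj _ _.
have [t Mt] := arc_ne (arcs _ (tagged c)).
have [s Hs] := par_exists (A j *m uvec t).
have ps : pimg (A j) (closure (Mc (tagged c))) s.
  by exists t => //; apply: subset_closure.
have [eb|nb] := eqVneq b1 b2; first by rewrite eb.
have E := disj j b1 b2 nb.
have : (Mc b1 `&` Mc b2) s by split; [apply: H1|apply: H2].
by rewrite E.
Qed.

Definition Ssum (r : rstate m) (j : X) :=
  \sum_(r' | (r' \in C) && (tau r' == j)) QQ r r'.

Lemma Qm_ge0 (r r' : rstate m) : 0 <= QQ r r'.
Proof. by rewrite /Qm; case: ifP => // _; case: Hrs. Qed.

Lemma S_cases (r : rstate m) j : Ssum r j = 0 \/
  (Ssum r j = P (tau r) j /\ exists r', [/\ r' \in C, r'.1 = r.2 & tau r' = j]).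
Proof.
case: (pickP (fun r' => [&& r' \in C, tau r' == j & r.2 == r'.1])) =>
   [r' /and3P[Cr' /eqP tj /eqP e]|H].
  right; split; last by exists r'.
  rewrite /Ssum (bigD1 r'); last by rewrite Cr' tj eqxx.
  rewrite /= big1 ?addr0; first by rewrite /Qm e eqxx tj.
  move=> r'' /andP[/andP[Cr'' /eqP tj''] ne]; rewrite /Qm; case: eqP => // e''.
  exfalso; move/eqP: ne; apply; apply: uniqR => //.
    by rewrite -e -e''.
  by rewrite tj tj''.
left; rewrite /Ssum big1 // => r'' /andP[Cr'' tj''].
by have := H r''; rewrite Cr'' tj'' /= /Qm => ->.
Qed.

Lemma piC_pos (r : rstate m) : r \in C -> 0 < piC r.
Proof.
case: Hst => pi0 pis piQ.
have [i0 [Ci0 pi0pos]] := exists_pos (P := fun i => i \in C) pi0 pis.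
pose v i := if i \in C then piC i else 0.
have A0 : forall i j, 0 <= restr C (QQ) i j.
  by move=> i j; rewrite /restr; case: ifP => // _; apply: Qm_ge0.
have v0 : forall i, 0 <= v i.
  by rewrite /v => i; case: ifP => [/pi0 //|_].
have vA : forall j, \sum_i v i * restr C (QQ) i j = v j.
  move=> j; rewrite /v /restr; have [Cj|nCj] := boolP (j \in C).
    rewrite -(piQ j Cj) [RHS]big_mkcond /=; apply: eq_bigr => i _.
    by case: (i \in C); rewrite ?andbT ?mul0r.
  by rewrite big1 // => i _; rewrite andbF mulr0.
move=> Cr; case: Hrc => _ _ irr _.
have [n Hn] := irr i0 r Ci0 Cr.
have := spread A0 v0 vA n i0 r; rewrite /v Ci0 Cr.
by apply: lt_le_trans; exact: mulr_gt0.
Qed.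

Lemma S_le (r : rstate m) j : Ssum r j <= P (tau r) j.
Proof.
case: (S_cases r j) => [->|[-> _]] //; by case: Hrs.
Qed.

Lemma rowsum (r : rstate m) : \sum_j Ssum r j = \sum_(r' in C) QQ r r'.
Proof.
by rewrite [RHS](partition_big (tau (m:=m)) predT) //=.
Qed.

Lemma S_eq (r : rstate m) j : r \in C -> Ssum r j = P (tau r) j.
Proof.
move=> Cr.
case: Hst => pi0 pis piQ.
have tot : \sum_(r in C) piC r * \sum_j Ssum r j = 1.
  under eq_bigr do rewrite rowsum mulr_sumr.
  rewrite exchange_big /= -pis; apply: eq_bigr => r' Cr'.
  by rewrite -(piQ r' Cr').
have tot2 : \sum_(r in C) piC r * (1 - \sum_j Ssum r j) = 0.
  under eq_bigr do rewrite mulrBr mulr1.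
  by rewrite sumrB pis tot subrr.
have Sle1 : forall r, \sum_j Ssum r j <= 1.
  move=> r1; case: Hrs => _ /(_ (tau r1)) <-; apply: ler_sum => j1 _; exact: S_le.
have hyp : forall r, r \in C -> 0 <= piC r * (1 - \sum_j Ssum r j).
  by move=> i Ci; apply: mulr_ge0; [exact: pi0|rewrite subr_ge0; exact: Sle1].
have H := psumr_eq0P hyp tot2 Cr.
move/eqP: H; rewrite mulf_eq0 (gt_eqF (piC_pos Cr)) /= subr_eq0 => /eqP S1.
have D : \sum_j (P (tau r) j - Ssum r j) = 0.
  by rewrite sumrB -S1; case: Hrs => _ ->; rewrite subrr.
have hyp2 : forall j, predT j -> 0 <= P (tau r) j - Ssum r j.
  by move=> i _; rewrite subr_ge0 S_le.
have := psumr_eq0P hyp2 D (isT : predT j).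
by move/eqP; rewrite subr_eq0 => /eqP ->.
Qed.

Lemma succ_ex (r : rstate m) j : r \in C -> 0 < P (tau r) j ->
  exists r', [/\ r' \in C, r'.1 = r.2 & tau r' = j].
Proof.
move=> Cr Pj; case: (S_cases r j) => [H0|[_ H]] //.
by move: Pj; rewrite -(S_eq j Cr) H0 ltxx.
Qed.

Lemma lumped i : \sum_(r | (r \in C) && (tau r == i)) piC r = p i.
Proof.
case: Hst => pi0 pis piQ.
have P0 : forall i j, 0 <= P i j by case: Hrs.
apply: (stat_unique (q := fun i => \sum_(r | (r \in C) && (tau r == i)) piC r) P0 Hirr Hp); split.
- by move=> k; apply: sumr_ge0 => r /andP[Cr _]; exact: pi0.
- by rewrite -pis [RHS](partition_big (tau (m:=m)) predT).
move=> j.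
have -> : \sum_i0 (\sum_(r | (r \in C) && (tau r == i0)) piC r) * P i0 j =
          \sum_(r in C) piC r * P (tau r) j.
  rewrite [RHS](partition_big (tau (m:=m)) predT) //=; apply: eq_bigr => k _.
  by rewrite mulr_suml; apply: eq_bigr => r /andP[_ /eqP ->].
transitivity (\sum_(r in C) piC r * Ssum r j).
  by apply: eq_bigr => r Cr; rewrite S_eq.
rewrite /Ssum; under eq_bigr do rewrite mulr_sumr.
rewrite exchange_big /=; apply: eq_bigr => r' /andP[Cr' _].
by rewrite (piQ r' Cr').
Qed.


Lemma surj (x : nat -> X) : Sigma P x -> exists2 y, SigmaC P C y & vartheta y = x.
Proof.
move=> Sx.
have P0 : forall i j, 0 <= P i j by case: Hrs.
have [a [Ca ta]] : exists a, a \in C /\ tau a = x 0%N.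
  have := pos_irr P0 Hirr Hp (x 0%N); rewrite -lumped.
  case: (pickP (fun r => (r \in C) && (tau r == x 0%N))) => [r /andP[Cr /eqP tr]|H].
    by move=> _; exists r.
  by rewrite big_pred0 // ltxx.
pose nxt (r : rstate m) (j : X) :=
  odflt r [pick r' | [&& r' \in C, r'.1 == r.2 & tau r' == j]].
have nxtP : forall r j, r \in C -> 0 < P (tau r) j ->
    [/\ nxt r j \in C, (nxt r j).1 = r.2 & tau (nxt r j) = j].
  move=> r j Cr Pj; rewrite /nxt; case: pickP => [r' /and3P[C' /eqP e' /eqP t']|H] //=.
  have [r' [C' e' t']] := succ_ex Cr Pj.
  by move: (H r'); rewrite C' e' t' !eqxx.
pose y := iterseq (fun k r => nxt r (x k.+1)) a.
have Hy : forall n, y n \in C /\ tau (y n) = x n.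
  elim=> [|n [Cn tn]] //=.
  have Pn : 0 < P (tau (y n)) (x n.+1) by rewrite tn; exact: Sx.
  by have [] := nxtP _ _ Cn Pn.
exists y; last by apply: funext => n; rewrite /vartheta; case: (Hy n).
move=> n; have [Cn tn] := Hy n; split => //.
have Pn : 0 < P (tau (y n)) (x n.+1) by rewrite tn; exact: Sx.
have [_ e t] := nxtP _ _ Cn Pn.
by rewrite /Qm /= e eqxx t.
Qed.

Variables (x0 : X) (r0 : rstate m).
Variable mu : {measure set (seqspace x0) -> \bar R}.
Variable muC : {measure set (seqspace r0) -> \bar R}.
Hypothesis Hmu : markov_measure mu p P.
Hypothesis HmuC : markov_measure_on C muC piC QQ.

Lemma muC_SetW w : forall (a : rstate m) u,
  muC (SetW r0 x0 (@tau X m) (a :: u) w) =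
  ((if all (fun r => r \in C) (a :: u) then piC a * chain QQ a u else 0) *
   chain P (tau (last a u)) w)%:E.
Proof.
elim: w => [|j w IH] a u.
  by rewrite SetW_nil HmuC /= mulr1.
rewrite SetW_cons measure_bigU; last 3 first.
- exact: index_enum_uniq.
- by move=> r; exact: SetW_meas.
- by move=> r r' nr; exact: SetW_disj.
under eq_bigr => r tr do rewrite rcons_cons IH last_rcons (eqP tr).
rewrite sumEFin /=; congr (_%:E).
case Hall : (_ && all _ u).
  have Hall' : all (fun r => r \in C) (a :: u) := Hall.
  have Cl : last a u \in C := allP Hall' _ (mem_last a u).
  move: Hall => /andP[Ha Hu].
  transitivity (piC a * chain QQ a u * chain P j w * Ssum (last a u) j).
    rewrite /Ssum big_mkcondl mulr_sumr; apply: eq_bigr => r _.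
    rewrite chain_rcons all_rcons Ha Hu /=.
    by case: (r \in C) => /=; [ring|rewrite mulr0 mul0r].
  by rewrite S_eq //; ring.
rewrite mul0r big1 // => r _.
have -> : (a \in C) && all (fun r => r \in C) (rcons u r) = false.
  by rewrite all_rcons; move: Hall; case: (a \in C); case: (all _ u); rewrite ?andbF.
by rewrite mul0r.
Qed.

Definition vt := (@vartheta X m : seqspace r0 -> seqspace x0).

Lemma preimage_cyl v : vt @^-1` (cyl x0 v) = SetW r0 x0 (@tau X m) [::] v.
Proof.
apply/seteqP; split => y.
  by move=> H; split => // k kv; rewrite add0n; apply: H.
by move=> [_ H] k kv; have := H k kv; rewrite add0n.
Qed.

Lemma vt_meas : measurable_fun setT vt.
Proof.
have h1 : @measurable _ (seqspace x0) = <<s cylinders x0 >> by [].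
apply: (@measurability _ _ _ _ setT vt (cylinders x0) h1).
move=> _ [B [v _ <-] <-]; rewrite setTI preimage_cyl; exact: SetW_meas.
Qed.

Lemma mu_setT : mu setT = 1%:E.
Proof.
rewrite -(cyl0 x0) cyl_split measure_bigU //; last first.
- by move=> i j; exact: cyl1_disj.
- by move=> i; exact: cyl_meas.
- exact: index_enum_uniq.
under eq_bigr do rewrite Hmu /= mulr1.
by rewrite sumEFin; case: Hp => _ ->.
Qed.

Lemma muC_setT : muC setT = 1%:E.
Proof.
rewrite -(cyl0 r0) cyl_split measure_bigU //; last first.
- by move=> i j; exact: cyl1_disj.
- by move=> i; exact: cyl_meas.
- exact: index_enum_uniq.
under eq_bigr do rewrite HmuC /= mulr1 andbT.
rewrite sumEFin -big_mkcond; case: Hst => _ -> _ //.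
Qed.

Lemma meas_eq (B : set (seqspace x0)) : measurable B -> muC (vt @^-1` B) = mu B.
Proof.
move=> mB.
pose m2 := measure_function_pushforward__canonical__measure_function_Measure muC vt_meas.
have m2E : forall A0, m2 A0 = muC (vt @^-1` A0) by [].
pose G : set (set (seqspace x0)) := cylinders x0 `|` [set set0].
have Gm : G `<=` measurable.
  move=> A0 [[w _ <-]|->]; [exact: cyl_meas|exact: measurable0].
have Gg : forall i : nat, G ((fun _ => setT) i).
  by move=> _; left; exists [::] => //; exact: cyl0.
have gc : \bigcup_(k : nat) (fun _ => (setT : set (seqspace x0))) k = setT.
  by apply/seteqP; split => // y _; exists 0%N.
have setIG : setI_closed G.
  move=> A1 B' [[u _ <-]|->] [[v _ <-]|->]; try by rewrite ?set0I ?setI0; right.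
  case: (cylI x0 u v) => [->|[w ->]]; [by right|by left; exists w].
have m1m2 : forall A0, G A0 -> mu A0 = m2 A0.
  move=> A0 [[w _ <-]|->]; last by rewrite !measure0.
  rewrite m2E preimage_cyl.
  case: w => [|i0 w]; first by rewrite SetW_nil !cyl0 mu_setT muC_setT.
  rewrite SetW_cons measure_bigU; last 3 first.
  - exact: index_enum_uniq.
  - by move=> r; exact: SetW_meas.
  - by move=> r r' nr; exact: SetW_disj.
  under eq_bigr => r tr do rewrite /= muC_SetW /= (eqP tr) andbT mulr1.
  rewrite sumEFin Hmu -mulr_suml -big_mkcondl lumped //.
have m1goo : forall k : nat, (mu ((fun _ => setT) k) < +oo)%E.
  by move=> _; rewrite mu_setT ltry.
have HB : <<s G >> B.
  apply: (sub_smallest2r (smallest_sigma_algebra _ _) _ mB).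
  by move=> A0 cA; left.
by rewrite -m2E -(g_sigma_algebra_measure_unique G Gm _ Gg gc mu m2 setIG m1m2 m1goo B HB).
Qed.

End Main.

Theorem proposition3p2 (R : realType) (X : finType) (P : X -> X -> R)
  (A : X -> 'M[R]_2) (p : X -> R)
  (m : X -> nat) (Mc : forall i : X, 'I_(m i) -> set R)
  (C : {set rstate m}) (piC : rstate m -> R)
  (x0 : X) (r0 : rstate m)
  (mu : {measure set (seqspace x0) -> \bar R})
  (muC : {measure set (seqspace r0) -> \bar R}) :
  (forall i, A i \in unitmx) ->
  row_stochastic P -> irreducible P -> stationary_prob P p ->
  proj_unif_hyp P A ->
  multicone_components P A Mc ->
  recurrent_class P A Mc C ->
  stationary_prob_on C (Qm (m:=m) P) piC ->
  markov_measure mu p P ->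
  markov_measure_on C muC piC (Qm (m:=m) P) ->
  (forall x, Sigma P x -> exists2 y, SigmaC P C y & vartheta y = x) /\
  (forall B : set (seqspace x0), measurable B ->
     muC ((@vartheta X m : seqspace r0 -> seqspace x0) @^-1` B) = mu B).
Proof.
move=> _ Hrs Hirr Hp _ Hmc Hrc Hst Hmu HmuC; split.
  by move=> x Sx; apply: (surj Hmc Hrc Hst Hrs Hirr Hp Sx).
by move=> B mB; apply: (meas_eq Hmc Hrc Hst Hrs Hirr Hp Hmu HmuC mB).
Qed.
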